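(* Let $M\in S_d^+$ and let $\mathcal T$ be an $M$-reduced mesh. Let $z\in\mathbb Z^d$. Then there exists $T\in\mathcal T$ with $-z\in\mathbb R_+T:=\{rx;\ r\ge0,\ x\in T\}$; and for any $T\in\mathcal T$ with $-z\in\mathbb R_+T$, denoting by $v_1,\dots,v_d$ the non-zero vertices of $T$, there exist non-negative integers $\beta_1,\dots,\beta_d$ such that $z+\beta_1v_1+\dots+\beta_dv_d=0$.
   Context: $S_d^+$ is the set of $d\times d$ symmetric positive definite matrices; $\langle u,v\rangle_M:=u^TMv$. An $M$-reduced mesh is a finite conforming mesh $\mathcal T$ of simplices in $\mathbb R^d$ such that: (I) the union of its simplices is a neighborhood of the origin; (II) the vertices of each $T\in\mathcal T$ lie in $\mathbb Z^d$ and $T$ has volume $1/d!$; (III) each $T\in\mathcal T$ has the origin as a vertex, and its other vertices $v_1,\dots,v_d$ satisfy $\langle v_i,v_j\rangle_M\ge0$ for all $i,j$. *)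

(* Defs.v *)
From HB Require Import structures.
From mathcomp Require Import all_boot all_order all_algebra.
From mathcomp Require Import reals.
Set Implicit Arguments. Unset Strict Implicit. Unset Printing Implicit Defensive.
Import Order.TTheory GRing.Theory Num.Theory.
Local Open Scope ring_scope.

(* A simplex of an M-reduced mesh has the origin as a vertex; it is encoded by
   the integer matrix V : 'M[int]_d whose rows are its other vertices v_1..v_d
   (so its vertices lie in Z^d by construction). *)

Definition intmx (R : realType) m n (A : 'M[int]_(m, n)) : 'M[R]_(m, n) :=
  map_mx (fun x : int => x%:~R) A.

Definition vertex (R : realType) d (V : 'M[int]_d) (i : option 'I_d) : 'rV[R]_d :=
  if i is Some j then row j (intmx R V) else 0.

Definition face (R : realType) d (V : 'M[int]_d) (S : {set option 'I_d})
    (x : 'rV[R]_d) : Prop :=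
  exists lam : option 'I_d -> R,
    [/\ (forall i, 0 <= lam i), (forall i, i \notin S -> lam i = 0),
        \sum_i lam i = 1 & x = \sum_i lam i *: vertex R V i].

Definition simplex (R : realType) d (V : 'M[int]_d) (x : 'rV[R]_d) : Prop :=
  face V setT x.

Definition cone (R : realType) d (V : 'M[int]_d) (x : 'rV[R]_d) : Prop :=
  exists r : R, 0 <= r /\ exists y, simplex V y /\ x = r *: y.

Definition volume (R : realType) d (V : 'M[int]_d) : R :=
  `| (\det V)%:~R | / (d`!)%:R.

Definition conforming (R : realType) d (mesh : seq 'M[int]_d) : Prop :=
  forall V V', V \in mesh -> V' \in mesh ->
    exists S S' : {set option 'I_d}, forall x : 'rV[R]_d,
      ((simplex V x /\ simplex V' x) <-> face V S x) /\
      ((simplex V x /\ simplex V' x) <-> face V' S' x).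

Definition nbhd_origin (R : realType) d (mesh : seq 'M[int]_d) : Prop :=
  exists e : R, 0 < e /\ forall x : 'rV[R]_d, (forall i, `|x 0 i| < e) ->
    exists V, V \in mesh /\ simplex V x.

Definition Mdot (R : realType) d (M : 'M[R]_d) (u v : 'rV[R]_d) : R :=
  (u *m M *m v^T) 0 0.

Definition sym_posdef (R : realType) d (M : 'M[R]_d) : Prop :=
  M^T = M /\ forall u : 'rV[R]_d, u != 0 -> 0 < Mdot M u u.

Definition M_reduced (R : realType) d (M : 'M[R]_d) (mesh : seq 'M[int]_d) : Prop :=
  [/\ conforming R mesh,
      nbhd_origin R mesh,
      (forall V, V \in mesh -> volume R V = 1 / (d`!)%:R) &
      (forall V, V \in mesh -> forall i j : 'I_d,
          0 <= Mdot M (vertex R V (Some i)) (vertex R V (Some j)))].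

(* Main.v *)
Require Import Defs.
From HB Require Import structures.
From mathcomp Require Import all_boot all_order all_algebra.
From mathcomp Require Import reals.
Import Order.TTheory GRing.Theory Num.Theory.
Local Open Scope ring_scope.

Lemma sum_opt (V : nmodType) d (F : option 'I_d -> V) :
  \sum_i F i = F None + \sum_j F (Some j).
Proof.
rewrite (bigD1 None) //=; congr (_ + _).
rewrite (reindex_omap Some id) /=; last by case.
by apply: eq_bigl => j; rewrite eqxx.
Qed.

Lemma intmxM (R : realType) d (A B : 'M[int]_d) :
  intmx R (A *m B) = intmx R A *m intmx R B.
Proof. by rewrite /intmx map_mxM. Qed.

Lemma intmx_row (R : realType) m d (A : 'M[int]_(m, d)) (B : 'M[int]_d) :
  intmx R (A *m B) = intmx R A *m intmx R B.
Proof. by rewrite /intmx map_mxM. Qed.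

Lemma cone_coef (R : realType) d (V : 'M[int]_d) x :
  cone V x -> exists c : 'rV[R]_d, (forall i, 0 <= c 0 i) /\ x = c *m intmx R V.
Proof.
move=> [r [r0 [y [[lam [lam0 _ _ ->]] ->]]]].
exists (\row_j (r * lam (Some j))); split.
  by move=> i; rewrite mxE mulr_ge0.
rewrite mulmx_sum_row sum_opt /= scaler0 add0r scaler_sumr.
by apply: eq_bigr => j _; rewrite mxE scalerA.
Qed.

Theorem lemma1p5 (R : realType) (d : nat) (M : 'M[R]_d)
    (mesh : seq 'M[int]_d) (z : 'rV[int]_d) :
  sym_posdef M -> M_reduced M mesh ->
  (exists V, V \in mesh /\ cone V (- intmx R z)) /\
  (forall V, V \in mesh -> cone V (- intmx R z) ->
     exists beta : 'I_d -> nat,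
       z + \sum_(i < d) ((beta i)%:Z *: row i V) = 0).
Proof.
move=> _ [_ [e [e0 He]] Hvol _]; split.
  set N : R := 1 + \sum_i `|(z 0 i)%:~R|.
  have N0 : 0 < N by rewrite ltr_wpDr ?sumr_ge0.
  have hx : forall i, `|((e / N) *: - intmx R z) 0 i| < e.
    move=> i; rewrite !mxE normrM normrN gtr0_norm ?divr_gt0 //.
    rewrite -ltr_pdivlMl ?divr_gt0 // invf_div divfK ?gt_eqF //.
    rewrite /N (bigD1 i) //= addrCA ltrDl.
    have : 0 <= \sum_(j | j != i) `|(z 0 j)%:~R| :> R by rewrite sumr_ge0.
    by move=> h; rewrite (lt_le_trans ltr01) // lerDl.
  have [V [Vin HV]] := He _ hx.
  exists V; split => //; exists (N / e); split; first by rewrite divr_ge0 ?ltW.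
  exists ((e / N) *: - intmx R z); split => //.
  by rewrite scalerA mulrA divfK ?gt_eqF // divff ?gt_eqF // scale1r.
move=> V Vin /cone_coef [c [c0 Hc]].
have hv := Hvol V Vin; rewrite /volume in hv.
have f0 : (d`!)%:R != 0 :> R by rewrite pnatr_eq0 -lt0n fact_gt0.
have hd : `|(\det V)%:~R| = 1 :> R.
  by move: hv => /(congr1 (fun t => t * (d`!)%:R)); rewrite !divfK.
have hdz : `|\det V| = 1 :> int.
  by apply/eqP; rewrite -(eqr_int R) intr_norm hd.
have hd2 : \det V * \det V = 1.
  by rewrite -expr2 -(real_normK (num_real _)) hdz expr1n.
set w := (\det V) *: ((- z) *m \adj V).
have hw : w *m V = - z.
  by rewrite /w -scalemxAl -mulmxA mul_adj_mx mul_mx_scalar scalerA hd2 scale1r.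
have unitV : intmx R V \in unitmx.
  rewrite unitmxE unitfE /intmx det_map_mx.
  by apply/eqP => h; move: hd; rewrite /= h normr0; apply/eqP; rewrite eq_sym oner_eq0.
have hwc : intmx R w = c.
  rewrite -(mulmxK unitV (intmx R w)) -(mulmxK unitV c) -Hc -intmx_row hw.
  by rewrite /intmx map_mxN.
have w0 : forall i, 0 <= w 0 i.
  by move=> i; rewrite -(ler0z R); move: (c0 i); rewrite -hwc mxE.
exists (fun i => absz (w 0 i)).
rewrite (eq_bigr (fun i : 'I_d => w 0 i *: row i V)); last first.
  by move=> i _; rewrite gez0_abs ?w0.
by rewrite -mulmx_sum_row hw addrN.
Qed.
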